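(* In a combinatorial auction where all bidders other than $i$ play piecewise constant strategies, every cell of bidder $i$'s action space is a convex polytope.
   Context: A combinatorial auction sells goods $M$ to bidders $N$; each bidder $i$ bids a vector $b_i\in\mathbb{R}_{\ge0}^r$ on his $r$ bundles of interest (other bundles bid $0$). An allocation gives each bidder one bundle of interest or $\emptyset$, pairwise disjoint; $X(b)$ is the set of allocations maximizing reported welfare $\sum_i b_i(x_i)$. Bidders' valuations are independent random variables $V_j$ and strategies $s_j$ map valuations to bids; piecewise constant means finitely many values, so $b_{-i}=s_{-i}(V_{-i})$ has finite support. A cell of bidder $i$'s action space $\mathbb{R}_{\ge0}^r$ is a maximal (with respect to inclusion) connected region $S$ such that for every $b_{-i}$ with positive probability there exists an allocation $x$ with $x\in X(b_i,b_{-i})$ for all $b_i\in S$. *)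

(* Defs.v *)
From HB Require Import structures.
From mathcomp Require Import all_boot all_order all_algebra.
From mathcomp Require Import all_classical all_reals all_analysis.
Set Implicit Arguments. Unset Strict Implicit. Unset Printing Implicit Defensive.
Import Order.TTheory GRing.Theory Num.Theory.
Import numFieldNormedType.Exports.
Local Open Scope classical_set_scope.
Local Open Scope ring_scope.

(* A bid of a bidder is a row vector 'rV[R]_r
   (entry k = bid on bundle k; all other bundles are bid 0). *)

Section Auction.
Variables (R : realType) (N M : finType) (r : nat).
Variable bundle : N -> 'I_r -> {set M}.

(* an allocation gives each bidder one bundle of interest (Some k) or the
   empty bundle (None) *)
Definition allocation := N -> option 'I_r.

Definition alloc_set (o : option 'I_r) (j : N) : {set M} :=
  match o with Some k => bundle j k | None => finset.set0 end.

Definition feasible (x : allocation) : Prop :=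
  forall j j' : N, j != j' -> (alloc_set (x j) j :&: alloc_set (x j') j')%SET = finset.set0.

Definition bid_value (bj : 'rV[R]_r) (o : option 'I_r) : R :=
  match o with Some k => bj 0 k | None => 0 end.

Definition welfare (b : N -> 'rV[R]_r) (x : allocation) : R :=
  \sum_(j : N) bid_value (b j) (x j).

Definition optimal (b : N -> 'rV[R]_r) (x : allocation) : Prop :=
  feasible x /\ forall y, feasible y -> welfare b y <= welfare b x.

Definition upd (b : N -> 'rV[R]_r) (i : N) (bi : 'rV[R]_r) : N -> 'rV[R]_r :=
  fun j => if j == i then bi else b j.

Definition nonneg_bid (v : 'rV[R]_r) : Prop := forall k, 0 <= v 0 k.

Definition action_space : set 'rV[R]_r := [set v | nonneg_bid v].

(* supp j = the (finite) set of bids that bidder j places with positive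
   probability; b_{-i} has positive probability iff b j \in supp j for j <> i *)
Definition pos_prob (supp : N -> seq 'rV[R]_r) (i : N) (b : N -> 'rV[R]_r) : Prop :=
  forall j, j != i -> b j \in supp j.

Definition common_alloc_region (supp : N -> seq 'rV[R]_r) (i : N)
    (S : set 'rV[R]_r) : Prop :=
  S `<=` action_space /\
  forall b, pos_prob supp i b ->
    exists x : allocation, forall bi, S bi -> optimal (upd b i bi) x.

Definition is_cell (supp : N -> seq 'rV[R]_r) (i : N) (S : set 'rV[R]_r) : Prop :=
  connected S /\ common_alloc_region supp i S /\
  forall T, connected T -> common_alloc_region supp i T -> S `<=` T -> T = S.

Definition convex_polytope (S : set 'rV[R]_r) : Prop :=
  exists H : seq ('rV[R]_r * R),
    S = [set v | forall h, h \in H -> \sum_(k < r) h.1 0 k * v 0 k <= h.2].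

End Auction.

(* Main.v *)
Require Import Defs.
From HB Require Import structures.
From mathcomp Require Import all_boot all_order all_algebra.
From mathcomp Require Import all_classical all_reals all_analysis.
From mathcomp Require Import ring lra.
Import Order.TTheory GRing.Theory Num.Theory.
Import numFieldNormedType.Exports.
Local Open Scope classical_set_scope.
Local Open Scope ring_scope.

Section Aux.
Variables (R : realType) (r : nat).

Lemma seg_cont (p q : 'rV[R]_r) :
  continuous (fun t : R => p + t *: (q - p)).
Proof.
move=> t; apply: cvgD; first exact: cvg_cst.
apply: cvgZ; [exact: cvg_id | exact: cvg_cst].
Qed.

Lemma convex_connected (P : set 'rV[R]_r) :
  (forall p q t, P p -> P q -> 0 <= t -> t <= 1 -> P (p + t *: (q - p))) ->
  connected P.
Proof.
move=> cP; have [[p0 Pp0]|nP] := pselect (exists p, P p); last first.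
  have -> : P = set0 by apply/seteqP; split => x // Px; apply: nP; exists x.
  exact: connected0.
have -> : P = \bigcup_(q in P) ((fun t : R => p0 + t *: (q - p0)) @` [set` `[0, 1]]).
  apply/seteqP; split => x.
    move=> Px; exists x => //; exists 1; first by rewrite /= in_itv /= lexx ler01.
    by rewrite scale1r addrC subrK.
  case=> q Pq [t]; rewrite /= in_itv /= => /andP [t0 t1] <-; exact: cP.
apply: bigcup_connected.
  exists p0 => q Pq /=; exists 0; first by rewrite /= in_itv /= lexx ler01.
  by rewrite scale0r addr0.
move=> q Pq; apply: connected_continuous_connected; first exact: segment_connected.
apply: continuous_subspaceT; exact: seg_cont.
Qed.

End Aux.


Section Main.
Variables (R : realType) (N M : finType) (r : nat).
Variable bundle : N -> 'I_r -> {set M}.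
Variable i : N.

Definition ev (o : option 'I_r) : 'rV[R]_r :=
  match o with Some k => delta_mx 0 k | None => 0 end.

Lemma bid_value_ev (v : 'rV[R]_r) o :
  bid_value v o = \sum_k ev o 0 k * v 0 k.
Proof.
case: o => [k|] /=; last by rewrite big1 // => k _; rewrite mxE mul0r.
rewrite (bigD1 k) //= big1 => [|k' nk]; rewrite !mxE eqxx /=.
  by rewrite eqxx mul1r addr0.
by rewrite (negbTE nk) mul0r.
Qed.

Definition rest (b : N -> 'rV[R]_r) (y : allocation N r) : R :=
  \sum_(j | j != i) bid_value (b j) (y j).

Lemma welfare_upd b bi y :
  welfare (upd b i bi) y = bid_value bi (y i) + rest b y.
Proof.
rewrite /welfare (bigD1 i) //= /upd eqxx; congr (_ + _).
by apply: eq_bigr => j /negbTE ->.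
Qed.

Definition cons_of (b : N -> 'rV[R]_r) (x y : allocation N r) : 'rV[R]_r * R :=
  (ev (y i) - ev (x i), rest b x - rest b y).

Lemma cons_ofP b x y (v : 'rV[R]_r) :
  (\sum_k (cons_of b x y).1 0 k * v 0 k <= (cons_of b x y).2) <->
  welfare (upd b i v) y <= welfare (upd b i v) x.
Proof.
rewrite !welfare_upd !bid_value_ev /=.
have -> : \sum_k (ev (y i) - ev (x i)) 0 k * v 0 k =
   \sum_k ev (y i) 0 k * v 0 k - \sum_k ev (x i) 0 k * v 0 k.
  by rewrite -sumrB; apply: eq_bigr => k _; rewrite !mxE mulrBl.
by split => H; lra.
Qed.


Lemma sum_negdelta (v : 'rV[R]_r) k :
  \sum_k0 (- delta_mx 0 k : 'rV[R]_r) 0 k0 * v 0 k0 = - v 0 k.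
Proof.
have := bid_value_ev v (Some k); rewrite /= => e.
rewrite e -sumrN; apply: eq_bigr => k0 _; rewrite mxE mulNr.
by rewrite /ev.
Qed.

Lemma opt_exists (b : N -> 'rV[R]_r) : exists x, optimal bundle b x.
Proof.
pose P := fun y : {ffun N -> option 'I_r} => `[< feasible bundle (fun j => y j) >].
have P0 : P [ffun => None].
  by apply/asboolP => j j' _; rewrite !ffunE /= finset.set0I.
case: (arg_maxP (fun y : {ffun N -> option 'I_r} => welfare b (fun j => y j)) P0) => y Py Hy.
exists (fun j => y j); split; first exact/asboolP.
move=> z fz.
have ez : (fun j => [ffun j => z j] j) = z by apply: funext => j; rewrite ffunE.
have := Hy [ffun j => z j]; rewrite /P ez; apply; exact/asboolP.
Qed.
End Main.

Theorem lemma2 (R : realType) (N M : finType) (r : nat)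
    (bundle : N -> 'I_r -> {set M})
    (supp : N -> seq 'rV[R]_r) (i : N)
    (supp_nonempty : forall j, j != i -> supp j != [::])
    (supp_nonneg : forall j v, j != i -> v \in supp j -> nonneg_bid v)
    (S : set 'rV[R]_r) :
  is_cell bundle supp i S -> convex_polytope S.
Proof.
move=> [cS [[SA HS] maxS]].
have hc : forall b, exists x : allocation N r, pos_prob supp i b ->
     forall bi, S bi -> optimal bundle (upd b i bi) x.
  move=> b; have [pb|npb] := pselect (pos_prob supp i b); last by exists (fun _ => None).
  by have [x hx] := HS b pb; exists x.
have [xc xcP] := choice hc.
have [s0 Ss0] : exists s, S s.
  apply: contrapT => nS.
  have T0 : common_alloc_region bundle supp i [set (0 : 'rV[R]_r)].
    split; first by move=> v -> k; rewrite mxE.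
    move=> b _; have [x hx] := @opt_exists R N M r bundle (upd b i 0).
    by exists x => bi ->.
  have ST : S `<=` [set 0] by move=> v Sv; exfalso; apply: nS; exists v.
  have c1 : connected [set (0 : 'rV[R]_r)] by exact: connected1.
  have e := maxS [set 0] c1 T0 ST.
  by apply: nS; exists 0; rewrite -e.
pose m := (\max_(j : N) size (supp j))%N.
pose bf (f : {ffun N -> 'I_m.+1}) : N -> 'rV[R]_r := fun j => nth 0 (supp j) (f j).
pose fb (b : N -> 'rV[R]_r) : {ffun N -> 'I_m.+1} :=
  [ffun j => inord (index (b j) (supp j))].
have bfb : forall b, pos_prob supp i b -> forall j, j != i -> bf (fb b) j = b j.
  move=> b pb j nj; have bj := pb j nj.
  have li : (index (b j) (supp j) < m.+1)%N.
    rewrite ltnS; apply: leq_trans (leq_bigmax j); apply: ltnW.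
    by rewrite index_mem.
  by rewrite /bf ffunE inordK // nth_index.
have updE : forall b v, pos_prob supp i b -> upd (bf (fb b)) i v = upd b i v.
  move=> b v pb; apply: funext => j; rewrite /upd; case: eqP => // /eqP nj.
  exact: bfb.
have pbf : forall b, pos_prob supp i b -> pos_prob supp i (bf (fb b)).
  by move=> b pb j nj; rewrite bfb //; exact: pb.
pose F := [seq f <- enum {ffun N -> 'I_m.+1} | `[< pos_prob supp i (bf f) >]].
pose Y := [seq y : {ffun N -> option 'I_r} <- enum {ffun N -> option 'I_r} |
            `[< feasible bundle (fun j => y j) >]].
pose H := [seq (- delta_mx 0 k : 'rV[R]_r, 0 : R) | k <- enum 'I_r] ++
  [seq @cons_of R N r i (bf f) (xc (bf f)) (fun j => y j) | f <- F, y : {ffun N -> option 'I_r} <- Y].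
pose Pset := [set v : 'rV[R]_r | forall h, h \in H ->
                \sum_(k < r) h.1 0 k * v 0 k <= h.2].
have SP : S `<=` Pset.
  move=> v Sv h; rewrite mem_cat => /orP [/mapP [k _ ->] |
     /allpairsP [[f y] [/= fF yY ->]]].
    by rewrite /= sum_negdelta oppr_le0; exact: SA.
  move: fF; rewrite mem_filter => /andP [/asboolP pf _].
  move: yY; rewrite mem_filter => /andP [/asboolP fy _].
  apply/(@cons_ofP R N r i).
  exact: (xcP _ pf v Sv).2 _ fy.
have PA : Pset `<=` @action_space R r.
  move=> v Pv k.
  have := Pv (- delta_mx 0 k, 0); rewrite mem_cat map_f ?mem_enum //=.
  by rewrite sum_negdelta oppr_le0; apply.
have Pcar : common_alloc_region bundle supp i Pset.
  split; first exact: PA.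
  move=> b pb; exists (xc (bf (fb b))) => v Pv; rewrite -(updE b v pb).
  split; first exact: (xcP _ (pbf b pb) s0 Ss0).1.
  move=> y fy; apply/(@cons_ofP R N r i).
  have ey : (fun j => [ffun j => y j] j) = y by apply: funext => j; rewrite ffunE.
  rewrite -ey; apply: Pv; rewrite mem_cat; apply/orP; right.
  apply/allpairsP; exists (fb b, [ffun j => y j]); split => //=.
    by rewrite mem_filter mem_enum andbT; apply/asboolP; exact: pbf.
  by rewrite mem_filter mem_enum andbT; apply/asboolP; rewrite ey.
have Pconn : connected Pset.
  apply: convex_connected => p q t Pp Pq t0 t1 h hH.
  have := Pp h hH; have := Pq h hH.
  set A := \sum_k h.1 0 k * p 0 k; set B := \sum_k h.1 0 k * q 0 k.
  have -> : \sum_k h.1 0 k * (p + t *: (q - p)) 0 k = A + t * (B - A).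
    rewrite /A /B -sumrB mulr_sumr -big_split /=; apply: eq_bigr => k _.
    rewrite !mxE; ring.
  move=> hq hp.
  have h1 : 0 <= (1 - t) * (h.2 - A) by apply: mulr_ge0; lra.
  have h2 : 0 <= t * (h.2 - B) by apply: mulr_ge0; lra.
  nra.
have ePS := maxS Pset Pconn Pcar SP.
by exists H; rewrite -ePS.
Qed.
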